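(* Let $V$ be a vertex operator algebra of central charge $C$ as described in the context, with $d=\dim V^{(1)}>0$, and let $\{u_\alpha\}_{\alpha=1}^d$ be a basis of $V^{(1)}$ with dual basis $\{u^\alpha\}$ with respect to the Li–Zamolodchikov metric, $\langle u^\alpha,u_\beta\rangle=\delta^\alpha_\beta$. For $a,b\in V^{(1)}$ define $$F(a,b;x,y)=\sum_{\alpha=1}^d\langle a,Y(u^\alpha,x)Y(u_\alpha,y)b\rangle .$$ Then $F(a,b;x,y)$ is (the expansion in the domain $|x|>|y|$ of) a rational function of the form $$F(a,b;x,y)=\frac{G(a,b;x,y)}{x^2y^2(x-y)^2},$$ where $G(a,b;x,y)$ is bilinear in $a,b$ and is a homogeneous symmetric polynomial in $x,y$ of degree $4$.
   Context: A vertex operator algebra (VOA) $V=\bigoplus_{k\ge0}V^{(k)}$ is $\mathbb Z$-graded with $\dim V^{(k)}<\infty$, $V^{(0)}=\mathbb C\mathbf 1$ ($\mathbf 1$ the vacuum), and for each $a\in V^{(k)}$ a vertex operator $Y(a,z)=\sum_{n\in\mathbb Z}a_nz^{-n-k}$ with modes $a_n\in\mathrm{End}\,V$, $a_{-k}\mathbf 1=a$, $Y(\mathbf 1,z)=\mathrm{Id}_V$; there is a conformal vector $\omega\in V^{(2)}$ with $Y(\omega,z)=\sum_nL_nz^{-n-2}$, the $L_n$ satisfying the Virasoro algebra $[L_m,L_n]=(m-n)L_{m+n}+(m^3-m)\frac{C}{12}\delta_{m,-n}$, $L_0$ acting on $V^{(k)}$ as $k$, $Y(L_{-1}a,z)=\partial_zY(a,z)$;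 and locality: for all $a,b$, $(x-y)^N[Y(a,x),Y(b,y)]=0$ for $N$ sufficiently large. It is assumed that $L_1v=0$ for all $v\in V^{(1)}$ and that $V$ carries the Li–Zamolodchikov metric: the unique symmetric invariant bilinear form $\langle\cdot,\cdot\rangle$ with $\langle\mathbf 1,\mathbf 1\rangle=1$ and $\langle Y(e^{zL_1}(-z^{-2})^{L_0}c,1/z)a,b\rangle=\langle a,Y(c,z)b\rangle$ for all $a,b,c\in V$, assumed non-degenerate. *)

(* Defs.v *)
From mathcomp Require Import all_boot all_algebra.
From mathcomp Require Import Rstruct complex.
From mathcomp Require Import mpoly.
Set Implicit Arguments.
Unset Strict Implicit.
Unset Printing Implicit Defensive.
Import GRing.Theory.
Local Open Scope ring_scope.

Definition CC : numClosedFieldType := (Rdefinitions.R)[i]%C.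

Section VOA.
Variable V : lmodType CC.

(* Vertex operators are encoded by their modes, with the usual convention
     Y(a,z) = \sum_{n \in Z} a(n) z^{-n-1},
   i.e. [mode a n b] = a(n) b.  For a of weight k the paper's mode a_n
   (Y(a,z) = \sum a_n z^{-n-k}) is a(n+k-1). *)
Variable mode : V -> int -> V -> V.
Variables (vac omega : V) (C : CC).

Definition Lvir (m : int) : V -> V := mode omega (m + 1).

Definition Vdeg (k : nat) (v : V) : Prop := Lvir 0 v = k%:R *: v.

Definition fin_dim (P : V -> Prop) : Prop :=
  exists s : seq V, forall v, P v ->
    exists c : 'I_(size s) -> CC, v = \sum_(i < size s) c i *: s`_i.

Definition binz (r : int) (i : nat) : CC :=
  (\prod_(j < i) (r - j%:Z)%:~R) / (i`!)%:R.

Record is_VOA : Prop := {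
  mode_linl : forall (c : CC) a a' n b,
      mode (c *: a + a') n b = c *: mode a n b + mode a' n b;
  mode_linr : forall (c : CC) a n b b',
      mode a n (c *: b + b') = c *: mode a n b + mode a n b';
  (* Y(a,z)b is a Laurent series: a(n)b = 0 for n large *)
  mode_trunc : forall a b, exists N : int, forall n, N <= n -> mode a n b = 0;
  vacuum_id : forall n b, mode vac n b = (if n == -1 then b else 0);
  creation : forall a, mode a (-1) vac = a /\
      (forall n : int, 0 <= n -> mode a n vac = 0);
  virasoro : forall (m n : int) v,
      Lvir m (Lvir n v) - Lvir n (Lvir m v) =
        (m - n)%:~R *: Lvir (m + n) v
        + (if m + n == 0 then ((m ^+ 3 - m)%:~R * C / 12%:R) *: v else 0);
  graded : forall v, exists (N : nat) (w : nat -> V),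
      v = \sum_(k < N) w k /\ forall k, Vdeg k (w k);
  deg_fin : forall k, fin_dim (Vdeg k);
  deg0 : forall v, Vdeg 0 v -> exists c : CC, v = c *: vac;
  (* Y(L_{-1} a, z) = d/dz Y(a,z) *)
  translation : forall a (n : int) b,
      mode (Lvir (-1) a) n b = - (n%:~R *: mode a (n - 1) b);
  (* locality: (x-y)^N [Y(a,x),Y(b,y)] = 0 for N large, coefficientwise *)
  locality : forall a b, exists N : nat, forall (m n : int) c,
      \sum_(j < N.+1) ((-1) ^+ j * 'C(N, j)%:R) *:
         (mode a (m + (N - j)%:Z) (mode b (n + j%:Z) c)
          - mode b (n + j%:Z) (mode a (m + (N - j)%:Z) c)) = 0;
  (* Jacobi (Borcherds) identity, written with finite sums:
     any N beyond which all the summands vanish may be used *)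
  borcherds : forall (a b c : V) (l m n : int) (N : nat),
      (forall i : nat, (N <= i)%N ->
         [/\ mode a (l + i%:Z) b = 0, mode b (n + i%:Z) c = 0
           & mode a (m + i%:Z) c = 0]) ->
      \sum_(i < N) binz m i *: mode (mode a (l + i%:Z) b) (m + n - i%:Z) c =
      \sum_(i < N) ((-1) ^+ i * binz l i) *:
         (mode a (m + l - i%:Z) (mode b (n + i%:Z) c)
          - (-1) ^+ `|l|%N *: mode b (n + l - i%:Z) (mode a (m + i%:Z) c))
}.

(* Invariance
     <Y(e^{zL_1}(-z^{-2})^{L_0} c, 1/z) a, b> = <a, Y(c,z) b>
   is written coefficientwise for homogeneous c of weight k
   (L_1^j c = 0 for j > k since it has negative weight):
     <a, c(n) b> = (-1)^k \sum_{j=0}^k 1/j! <(L_1^j c)(2k-j-n-2) a, b>. *)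
Record is_LZ_metric (form : V -> V -> CC) : Prop := {
  form_linl : forall (c : CC) a a' b, form (c *: a + a') b = c * form a b + form a' b;
  form_sym : forall a b, form a b = form b a;
  form_vac : form vac vac = 1;
  form_inv : forall (k : nat) c a b (n : int), Vdeg k c ->
      form a (mode c n b) =
      (-1) ^+ k * \sum_(j < k.+1)
          (j`!%:R)^-1 * form (mode (iter j (Lvir 1) c) (2 * k%:Z - j%:Z - n - 2) a) b;
  form_nondeg : forall a, (forall b, form a b = 0) -> a = 0
}.

(* Coefficient of x^p y^q in
     F(a,b;x,y) = \sum_alpha <a, Y(u^alpha,x) Y(u_alpha,y) b>. *)
Definition Fcoef (form : V -> V -> CC) (d : nat) (u u' : 'I_d -> V)
    (a b : V) (p q : int) : CC :=
  \sum_(al < d) form a (mode (u' al) (- p - 1) (mode (u al) (- q - 1) b)).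

End VOA.

(* Coefficient of x^p y^q in the expansion of (x - y)^{-2} in the domain
   |x| > |y| :  (x-y)^{-2} = \sum_{j >= 0} (j+1) x^{-j-2} y^j. *)
Definition iota_inv_sq (p q : int) : CC :=
  if (0 <= q) && (p == - q - 2) then (q + 1)%:~R else 0.

Definition xvar : 'I_2 := ord0.
Definition yvar : 'I_2 := ord_max.

(* Coefficient of x^p y^q in the expansion, in the domain |x| > |y|, of
   the rational function  G(x,y) / (x^2 y^2 (x-y)^2). *)
Definition expand_xy (G : {mpoly CC[2]}) (p q : int) : CC :=
  \sum_(m <- msupp G)
     G@_m * iota_inv_sq (p - (m xvar)%:Z + 2) (q - (m yvar)%:Z + 2).

(* Main.v *)
Require Import Defs.
From mathcomp Require Import all_boot all_algebra.
From mathcomp Require Import Rstruct complex.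
From mathcomp Require Import fingroup perm mpoly ssrcomplements bigenough.
From mathcomp Require Import ring zify.
Import GRing.Theory Num.Theory BigEnough.
Local Open Scope ring_scope.

Section Poly.
Variable F : 'X_{1..2} -> CC.

Definition Ef (G : {mpoly CC[2]}) := \sum_(m <- msupp G) G@_m * F m.

Lemma EfE G i : (msize G <= i)%N ->
  Ef G = \sum_(m : 'X_{1..2 < i}) G@_m * F m.
Proof.
move=> le_pi; set I : subFinType _ := 'X_{1..2 < i}.
rewrite /Ef (big_mksub I) ?msupp_uniq //=; first last.
  by move=> x /msize_mdeg_lt /leq_trans; apply.
rewrite big_rmcond //= => j /memN_msupp_eq0 ->.
by rewrite mul0r.
Qed.

Lemma EfD G H : Ef (G + H) = Ef G + Ef H.
Proof.
pose_big_enough i.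
  rewrite !(EfE _ i) // -big_split; apply/eq_bigr.
  by case=> /= [m _] _; rewrite mcoeffD mulrDl.
by close.
Qed.

Lemma EfZ c G : Ef (c *: G) = c * Ef G.
Proof.
pose_big_enough i.
  rewrite !(EfE _ i) // mulr_sumr; apply/eq_bigr.
  by move=> j _; rewrite mcoeffZ mulrA.
by close.
Qed.

Lemma EfX m : Ef 'X_[m] = F m.
Proof. by rewrite /Ef msuppX big_seq1 mcoeffX eqxx mul1r. Qed.
End Poly.

Definition mnm2 (i j : nat) : 'X_{1..2} :=
  [multinom (if k == xvar then i else j) | k < 2].
Lemma mnm2x i j : mnm2 i j xvar = i.
Proof. by rewrite mnmE eqxx. Qed.
Lemma mnm2y i j : mnm2 i j yvar = j.
Proof. by rewrite mnmE. Qed.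

Lemma I2_cases (z : 'I_2) : z = xvar \/ z = yvar.
Proof.
case: z => [[|[|k]]] Hk; [left|right|by []]; exact: val_inj.
Qed.

Lemma mnm2_perm i j (t : 'S_2) :
  [multinom (mnm2 i j) (t k) | k < 2] =
  if t xvar == xvar then mnm2 i j else mnm2 j i.
Proof.
apply/mnmP => k; rewrite mnmE.
have [tx|tx] := eqVneq (t xvar) xvar.
  rewrite !mnmE; case: (I2_cases k) => ->; first by rewrite tx.
  have : t yvar != t xvar by rewrite (inj_eq perm_inj).
  by rewrite tx; case: (I2_cases (t yvar)) => ->.
have ty : t xvar = yvar by case: (I2_cases (t xvar)) tx => ->.
rewrite !mnmE; case: (I2_cases k) => ->; first by rewrite ty.
have : t yvar != t xvar by rewrite (inj_eq perm_inj).
by rewrite ty; case: (I2_cases (t yvar)) => ->.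
Qed.

Definition Pair (i j : nat) : {mpoly CC[2]} := 'X_[mnm2 i j] + 'X_[mnm2 j i].

Lemma Pair_sym i j : Pair i j \is symmetric.
Proof.
apply/issymP => s; rewrite /Pair msymD !msymX !mnm2_perm.
by case: ifP => // _; rewrite addrC.
Qed.

Lemma mnm2_homog i j : ('X_[mnm2 i j] : {mpoly CC[2]}) \is (i + j).-homog.
Proof.
rewrite dhomogX.
apply/eqP; rewrite -[LHS]/(mdeg (mnm2 i j)) mdegE !big_ord_recl big_ord0 /= addn0.
by rewrite !mnmE.
Qed.

Definition Gpoly (g0 g1 g2 : CC) : {mpoly CC[2]} :=
  g0 *: Pair 4 0 + g1 *: Pair 3 1 + g2 *: 'X_[mnm2 2 2].

Lemma Gpoly_homog g0 g1 g2 : Gpoly g0 g1 g2 \is 4.-homog.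
Proof.
have HP : forall i j, (i + j = 4)%N -> Pair i j \is 4.-homog.
  move=> i j Hij; rewrite /Pair; apply: dhomogD.
    by have := mnm2_homog i j; rewrite Hij.
  by have := mnm2_homog j i; rewrite addnC Hij.
rewrite /Gpoly; apply: dhomogD; [apply: dhomogD|]; apply: dhomogZ.
- exact: HP.
- exact: HP.
- exact: (mnm2_homog 2 2).
Qed.

Lemma Gpoly_sym g0 g1 g2 : Gpoly g0 g1 g2 \is symmetric.
Proof.
rewrite /Gpoly; apply: rpredD; [apply: rpredD|]; apply: rpredZ.
- exact: Pair_sym.
- exact: Pair_sym.
apply/issymP => s; rewrite msymX mnm2_perm.
by case: ifP.
Qed.

Lemma Gpoly_lin c x0 x1 x2 y0 y1 y2 :
  Gpoly (c * x0 + y0) (c * x1 + y1) (c * x2 + y2) =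
  c *: Gpoly x0 x1 x2 + Gpoly y0 y1 y2.
Proof.
have lin3 : forall (P Q R : {mpoly CC[2]}),
  (c*x0+y0)*:P + (c*x1+y1)*:Q + (c*x2+y2)*:R =
  c *: (x0*:P + x1*:Q + x2*:R) + (y0*:P + y1*:Q + y2*:R).
  move=> P Q R; rewrite !scalerDl !scalerDr !scalerA.
  by rewrite [X in X + _ = _]addrACA [LHS]addrACA.
exact: lin3.
Qed.

Definition Iq (p q : int) (i j : nat) :=
  iota_inv_sq (p - i%:Z + 2) (q - j%:Z + 2).

Lemma expand_G g0 g1 g2 p q :
  expand_xy (Gpoly g0 g1 g2) p q =
  g0 * (Iq p q 4 0 + Iq p q 0 4) + g1 * (Iq p q 3 1 + Iq p q 1 3)
  + g2 * Iq p q 2 2.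
Proof.
pose Fpq (m : 'X_{1..2}) :=
  iota_inv_sq (p - (m xvar)%:Z + 2) (q - (m yvar)%:Z + 2).
have -> : expand_xy (Gpoly g0 g1 g2) p q = Ef Fpq (Gpoly g0 g1 g2) by [].
rewrite /Gpoly /Pair !EfD !EfZ !EfD !EfX /Fpq /Iq !mnm2x !mnm2y.
done.
Qed.

Lemma Iq_off p q i j : (i + j = 4)%N -> p + q != -2 -> Iq p q i j = 0.
Proof.
move=> Hij Hpq; rewrite /Iq /iota_inv_sq; case: ifP => // /andP [_ /eqP E].
move: Hpq; lia.
Qed.

Lemma Iq_on q i j : (i + j = 4)%N ->
  Iq (- q - 2) q i j = if (j%:Z <= q + 2) then (q - j%:Z + 3)%:~R else 0.
Proof.
move=> Hij; rewrite /Iq /iota_inv_sq.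
have -> : (- q - 2 - i%:Z + 2 == - (q - j%:Z + 2) - 2) = true.
  apply/eqP; lia.
rewrite andbT.
have -> : (0 <= q - j%:Z + 2) = (j%:Z <= q + 2) by apply/idP/idP; lia.
case: ifP => // _; congr (_%:~R); lia.
Qed.

Section Work.
Variable V : lmodType CC.
Variable mode : V -> int -> V -> V.
Variables (vac omega : V) (C : CC).
Hypothesis HV : is_VOA mode vac omega C.
Variable form : V -> V -> CC.
Hypothesis Hform : is_LZ_metric mode vac omega form.

Local Notation L := (Lvir mode omega).

Lemma mode0l n b : mode 0 n b = 0.
Proof.
have := mode_linl HV 1 0 0 n b; rewrite !scale1r addr0 => h.
by apply: (addrI (mode 0 n b)); rewrite -h addr0.
Qed.

Lemma mode0r a n : mode a n 0 = 0.
Proof.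
have := mode_linr HV 1 a n 0 0; rewrite !scale1r addr0 => h.
by apply: (addrI (mode a n 0)); rewrite -h addr0.
Qed.

Lemma modeDl a a' n b : mode (a + a') n b = mode a n b + mode a' n b.
Proof. by have := mode_linl HV 1 a a' n b; rewrite !scale1r. Qed.

Lemma modeZl c a n b : mode (c *: a) n b = c *: mode a n b.
Proof. by have := mode_linl HV c a 0 n b; rewrite !addr0 mode0l addr0. Qed.

Lemma modeDr a n b b' : mode a n (b + b') = mode a n b + mode a n b'.
Proof. by have := mode_linr HV 1 a n b b'; rewrite !scale1r. Qed.

Lemma modeZr c a n b : mode a n (c *: b) = c *: mode a n b.
Proof. by have := mode_linr HV c a n b 0; rewrite !addr0 mode0r addr0. Qed.

Lemma mode_suml I (r : seq I) P (F : I -> V) n b :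
  mode (\sum_(i <- r | P i) F i) n b = \sum_(i <- r | P i) mode (F i) n b.
Proof.
apply: (big_morph (fun v => mode v n b)) => [x y|]; first exact: modeDl.
exact: mode0l.
Qed.

Lemma form0l b : form 0 b = 0.
Proof.
have := form_linl Hform 1 0 0 b; rewrite scale1r addr0 !mul1r => h.
by apply: (addrI (form 0 b)); rewrite -h addr0.
Qed.

Lemma formDl a a' b : form (a + a') b = form a b + form a' b.
Proof. by have := form_linl Hform 1 a a' b; rewrite scale1r mul1r. Qed.

Lemma formZl c a b : form (c *: a) b = c * form a b.
Proof. by have := form_linl Hform c a 0 b; rewrite addr0 form0l addr0. Qed.

Lemma form0r b : form b 0 = 0.
Proof. by rewrite (form_sym Hform) form0l. Qed.
Lemma formDr a b b' : form a (b + b') = form a b + form a b'.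
Proof. by rewrite (form_sym Hform) formDl (form_sym Hform b) (form_sym Hform b'). Qed.
Lemma formZr c a b : form a (c *: b) = c * form a b.
Proof. by rewrite (form_sym Hform) formZl (form_sym Hform b). Qed.

Lemma form_suml I (r : seq I) P (F : I -> V) b :
  form (\sum_(i <- r | P i) F i) b = \sum_(i <- r | P i) form (F i) b.
Proof.
apply: (big_morph (fun v => form v b)) => [x y|]; first exact: formDl.
exact: form0l.
Qed.

Lemma form_sumr I (r : seq I) P (F : I -> V) b :
  form b (\sum_(i <- r | P i) F i) = \sum_(i <- r | P i) form b (F i).
Proof.
apply: (big_morph (fun v => form b v)) => [x y|]; first exact: formDr.
exact: form0r.
Qed.

Lemma L0vac : L 0 vac = 0.
Proof. by rewrite /Lvir (creation HV omega).2. Qed.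
Lemma Lm1vac : L (-1) vac = 0.
Proof. by rewrite /Lvir (creation HV omega).2. Qed.
Lemma L1vac : L 1 vac = 0.
Proof. by rewrite /Lvir (creation HV omega).2. Qed.
Lemma omegaE : omega = L (-2) vac.
Proof. by rewrite /Lvir (creation HV omega).1. Qed.

Lemma L1omega : L 1 omega = 0.
Proof.
have := virasoro HV 1 (-2) vac.
rewrite /= -omegaE L1vac {2}/Lvir mode0r subr0.
have -> : (1 - 2 : int) = -1 by [].
by rewrite Lm1vac scaler0 addr0.
Qed.

Lemma omega_deg2 : Vdeg mode omega 2 omega.
Proof.
have := virasoro HV 0 (-2) vac.
rewrite /= -omegaE L0vac {2}/Lvir mode0r subr0 add0r /Vdeg => ->.
by rewrite addr0.
Qed.

Lemma iterL1omega j : (0 < j)%N -> iter j (L 1) omega = 0.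
Proof.
elim: j => // [[|j]] IH _; first by rewrite /= L1omega.
by rewrite iterS IH // /Lvir mode0r.
Qed.

Lemma L0_sa a b : form a (L 0 b) = form (L 0 a) b.
Proof.
Proof.
rewrite /Lvir (form_inv Hform a b 1 omega_deg2).
rewrite !big_ord_recl big_ord0 /= L1omega {1}/Lvir mode0r !mode0l !form0l.
by rewrite !mulr0 !addr0 expr2 mulrNN !mul1r invr1 mul1r.
Qed.


Lemma mode_sumr I (r : seq I) P (F : I -> V) a n :
  mode a n (\sum_(i <- r | P i) F i) = \sum_(i <- r | P i) mode a n (F i).
Proof.
apply: (big_morph (fun v => mode a n v)) => [x y|]; first exact: modeDr.
exact: mode0r.
Qed.

Lemma LZ m c v : L m (c *: v) = c *: L m v.
Proof. exact: modeZr. Qed.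
Lemma Lsum m I (r : seq I) P (F : I -> V) :
  L m (\sum_(i <- r | P i) F i) = \sum_(i <- r | P i) L m (F i).
Proof. exact: mode_sumr. Qed.

Lemma eig_nat v (lam : CC) : L 0 v = lam *: v ->
  (forall k : nat, lam != k%:R) -> v = 0.
Proof.
move=> Hv Hlam; have [N [w [Ev Hw]]] := graded HV v.
rewrite Ev in Hv *; clear Ev v.
elim: N w Hw Hv => [|N IH] w Hw Hv; first by rewrite big_ord0.
have HL : forall M, L 0 (\sum_(k < M) w k) = \sum_(k < M) k%:R *: w k.
  by move=> M; rewrite Lsum; apply: eq_bigr => k _; apply: Hw.
pose w' k := (k%:R - N%:R) *: w k.
have Hw' : forall k, Vdeg mode omega k (w' k).
  by move=> k; rewrite /Vdeg /w' LZ (Hw k) !scalerA mulrC.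
have E : (lam - N%:R) *: \sum_(k < N.+1) w k = \sum_(k < N) w' k.
  rewrite scalerBl -Hv HL big_ord_recr /= (big_ord_recr N w) /=.
  rewrite scalerDr [X in _ - X]addrC opprD addrA addrK scaler_sumr -sumrB.
  by apply: eq_bigr => k _; rewrite /w' scalerBl.
have := IH w' Hw'; rewrite -E.
rewrite LZ Hv scalerA mulrC -scalerA => /(_ erefl) /eqP.
rewrite scaler_eq0 subr_eq0 (negbTE (Hlam N)) /= => /eqP.
done.
Qed.


Lemma binz0 r : binz r 0 = 1.
Proof. by rewrite /binz big_ord0 divr1. Qed.
Lemma binz1 r : binz r 1 = r%:~R.
Proof. by rewrite /binz big_ord1 subr0 divr1. Qed.
Lemma binz0S i : binz 0 i.+1 = 0.
Proof. by rewrite /binz big_ord_recl /= subr0 mul0r mul0r. Qed.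
Lemma binz1SS i : binz 1 i.+2 = 0.
Proof. by rewrite /binz big_ord_recl big_ord_recl /= subrr mul0r mulr0 mul0r. Qed.

Lemma trunc_nat a b (o : int) : exists N : nat, forall i : nat, (N <= i)%N ->
  mode a (o + i%:Z) b = 0.
Proof.
have [N0 HN] := mode_trunc HV a b.
exists `|N0 - o|%N => i Hi; apply: HN; lia.
Qed.


Lemma wt_mode x y (h k : CC) n : L 0 x = h *: x -> L 0 y = k *: y ->
  L 0 (mode x n y) = (h + k - n%:~R - 1) *: mode x n y.
Proof.
move=> Hx Hy.
have [N1 H1] := trunc_nat omega x 0.
have [N2 H2] := trunc_nat x y n.
have [N3 H3] := trunc_nat omega y 1.
have := @borcherds _ _ _ _ _ HV omega x y 0 1 n (N1 + N2 + N3).+2.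
have HN : forall i : nat, ((N1 + N2 + N3).+2 <= i)%N ->
   [/\ mode omega (0 + i%:Z) x = 0, mode x (n + i%:Z) y = 0
           & mode omega (1 + i%:Z) y = 0].
  move=> i Hi; split; [apply: H1|apply: H2|apply: H3]; lia.
move=> /(_ HN) {HN H1 H2 H3}.
rewrite big_ord_recl big_ord_recl big1; last first.
  by move=> i _; rewrite binz1SS scale0r.
rewrite big_ord_recl big1; last first.
  by move=> i _; rewrite binz0S mulr0 scale0r.
rewrite /= !binz0 binz1 !addr0.
have -> : mode omega 0 x = L (-1) x by [].
rewrite /bump /=.
rewrite addn0.
have -> : mode omega (0 + 1) x = L 0 x by [].
have -> : (1 + n - 1) = n by lia.
have E1 : forall z, mode omega 1 z = L 0 z by [].
rewrite !E1.
rewrite (translation HV) Hx Hy modeZl modeZr.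
have -> : (1 + n - 1) = n by lia.
rewrite !scale1r expr0 mul1r scale1r.
rewrite intrD /= => /eqP; rewrite eq_sym subr_eq => /eqP ->.
rewrite -scaleNr -!scalerDl; congr (_ *: _).
have -> : (1%:~R : CC) = 1 by [].
ring.
Qed.


Lemma wt_int x y (h k n : int) : L 0 x = h%:~R *: x -> L 0 y = k%:~R *: y ->
  L 0 (mode x n y) = (h + k - n - 1)%:~R *: mode x n y.
Proof.
move=> Hx Hy; rewrite (wt_mode x y _ _ n Hx Hy); congr (_ *: _).
by rewrite !intrB intrD.
Qed.

Lemma eig_neg v (r : int) : L 0 v = r%:~R *: v -> r < 0 -> v = 0.
Proof.
move=> Hv Hr; apply: (eig_nat _ _ Hv) => k; apply/eqP => E.
have : r = k%:Z by apply: (intr_inj (R:=CC)); rewrite E.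
lia.
Qed.

Lemma orth w x (h k : CC) : L 0 w = h *: w -> L 0 x = k *: x -> h != k ->
  form w x = 0.
Proof.
move=> Hw Hx hk; have := L0_sa w x; rewrite Hw Hx formZr formZl => /eqP.
rewrite -subr_eq0 -mulrBl mulf_eq0 subr_eq0 eq_sym (negbTE hk) /= => /eqP.
done.
Qed.

Hypothesis HL1 : forall v, Vdeg mode omega 1 v -> L 1 v = 0.

Lemma deg1_int v : Vdeg mode omega 1 v -> L 0 v = (1%:Z)%:~R *: v.
Proof. by []. Qed.

Lemma V2 x z n : Vdeg mode omega 1 x -> Vdeg mode omega 1 z -> 2 <= n ->
  mode x n z = 0.
Proof.
move=> /deg1_int Hx /deg1_int Hz Hn.
apply: (eig_neg _ _ (wt_int _ _ _ _ n Hx Hz)); lia.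
Qed.

Lemma formvac c : form vac (c *: vac) = c.
Proof. by rewrite formZr (form_vac Hform) mulr1. Qed.

Lemma V0 x y : Vdeg mode omega 1 x -> Vdeg mode omega 1 y ->
  mode x 1 y = - form x y *: vac.
Proof.
move=> Hx1 Hy1.
have H0 : Vdeg mode omega 0 (mode x 1 y).
  by rewrite /Vdeg (wt_int _ _ _ _ 1 (deg1_int _ Hx1) (deg1_int _ Hy1)).
have [c Ec] := deg0 HV H0.
have := form_inv Hform vac y 1 Hx1.
rewrite !big_ord_recl big_ord0 /= (HL1 _ Hx1) mode0l form0l mulr0 addr0.
rewrite [mode x _ vac](_ : _ = x); last exact: (creation HV x).1.
rewrite Ec formvac => ->.
by rewrite expr1 invr1 !addr0 !mul1r mulN1r.
Qed.


Lemma comm1 x y b (n : int) : Vdeg mode omega 1 x -> Vdeg mode omega 1 y ->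
  Vdeg mode omega 1 b -> 1 <= n ->
  mode x n (mode y (-n) b) = mode y (-n) (mode x n b)
     + mode (mode x 0 y) 0 b + n%:~R *: mode (mode x 1 y) (-1) b.
Proof.
move=> Hx Hy Hb Hn.
have := @borcherds _ _ _ _ _ HV x y b 0 n (-n) (`|n|.+2).
have HN : forall i : nat, (`|n|.+2 <= i)%N ->
   [/\ mode x (0 + i%:Z) y = 0, mode y (-n + i%:Z) b = 0
           & mode x (n + i%:Z) b = 0].
  move=> i Hi; split; apply: V2 => //; lia.
move=> /(_ HN) {HN}.
rewrite big_ord_recl big_ord_recl big1; last first.
  by move=> i _; rewrite (V2 x y) ?mode0l ?scaler0 //; rewrite /bump /=; lia.
rewrite big_ord_recl big1; last first.
  by move=> i _; rewrite binz0S mulr0 scale0r.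
rewrite /= !binz0 binz1 !addr0 /bump /= addn0 subrr add0r sub0r.
rewrite expr0 mul1r !scale1r => /eqP; rewrite eq_sym subr_eq => /eqP ->.
by rewrite addrC addrA.
Qed.

Lemma skew x y : Vdeg mode omega 1 x -> Vdeg mode omega 1 y ->
  mode x 0 y = - mode y 0 x.
Proof.
move=> Hx Hy.
have := @borcherds _ _ _ _ _ HV x y vac 0 (-1) 0 2.
have HN : forall i : nat, (2 <= i)%N ->
   [/\ mode x (0 + i%:Z) y = 0, mode y (0 + i%:Z) vac = 0
           & mode x (-1 + i%:Z) vac = 0].
  move=> i Hi; split; first (apply: V2 => //; lia).
    by apply: (creation HV y).2; lia.
  by apply: (creation HV x).2; lia.
move=> /(_ HN) {HN}.
rewrite !big_ord_recl !big_ord0 /= binz0S mulr0 scale0r !addr0 !binz0.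
rewrite /bump /= addn0 binz1 add0r (V0 _ _ Hx Hy) modeZl (vacuum_id HV) /=.
rewrite !scaler0 addr0 (creation HV _).1 (creation HV x).1 (creation HV y).2 //.
by rewrite mode0r expr0 mul1r !scale1r sub0r.
Qed.


Lemma vdeg0 k : Vdeg mode omega k 0.
Proof. by rewrite /Vdeg /Lvir mode0r scaler0. Qed.
Lemma vdegD k v w : Vdeg mode omega k v -> Vdeg mode omega k w -> Vdeg mode omega k (v + w).
Proof. by rewrite /Vdeg /Lvir modeDr => -> ->; rewrite scalerDr. Qed.
Lemma vdegZ k c v : Vdeg mode omega k v -> Vdeg mode omega k (c *: v).
Proof. by rewrite /Vdeg LZ => ->; rewrite !scalerA mulrC. Qed.
Lemma vdegB k v w : Vdeg mode omega k v -> Vdeg mode omega k w -> Vdeg mode omega k (v - w).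
Proof. by move=> Hv Hw; apply: vdegD => //; rewrite -scaleN1r; apply: vdegZ. Qed.
Lemma vdeg_sum k I (r : seq I) (F : I -> V) :
  (forall i, Vdeg mode omega k (F i)) -> Vdeg mode omega k (\sum_(i <- r) F i).
Proof.
move=> H; elim: r => [|i r IH]; first by rewrite big_nil; apply: vdeg0.
by rewrite big_cons; apply: vdegD.
Qed.

Variable d : nat.
Variables u u' : 'I_d -> V.
Hypothesis Hu1 : forall al, Vdeg mode omega 1 (u al).
Hypothesis Hu_span : forall v, Vdeg mode omega 1 v ->
               exists c : 'I_d -> CC, v = \sum_(al < d) c al *: u al.
Hypothesis Hu'1 : forall al, Vdeg mode omega 1 (u' al).
Hypothesis Hdual : forall al be, form (u' al) (u be) = (al == be)%:R.

Lemma delta_sum (c : 'I_d -> CC) be :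
  \sum_(al < d) c al * (be == al)%:R = c be.
Proof.
rewrite (bigD1 be) //= eqxx mulr1 big1 ?addr0 // => al /negbTE.
by rewrite eq_sym => ->; rewrite mulr0.
Qed.

Lemma expand_u v : Vdeg mode omega 1 v ->
  v = \sum_(be < d) form (u' be) v *: u be.
Proof.
move=> /Hu_span [c ->]; apply: eq_bigr => be _; congr (_ *: _).
rewrite form_sumr (eq_bigr (fun al => c al * (be == al)%:R)) ?delta_sum //.
by move=> al _; rewrite formZr Hdual.
Qed.

Lemma nondeg1 w : Vdeg mode omega 1 w -> (forall be, form w (u be) = 0) -> w = 0.
Proof.
move=> Hw Hwu; apply: (form_nondeg Hform) => x.
have [N [xs [-> Hxs]]] := graded HV x.
rewrite form_sumr big1 // => k _.
have [Ek|nk] := eqVneq (k : nat) 1%N.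
  rewrite Ek.
  have [c ->] := Hu_span _ (Hxs 1%N).
  by rewrite form_sumr big1 // => al _; rewrite formZr Hwu mulr0.
apply: (orth _ _ _ _ Hw (Hxs k)).
by rewrite eqr_nat eq_sym.
Qed.

Lemma expand_u' v : Vdeg mode omega 1 v ->
  v = \sum_(al < d) form (u al) v *: u' al.
Proof.
move=> Hv; apply/eqP; rewrite eq_sym -subr_eq0; apply/eqP.
apply: nondeg1.
  apply: vdegB => //; apply: vdeg_sum => al; exact: vdegZ.
move=> be; rewrite formDl form_suml.
rewrite (eq_bigr (fun al => form (u al) v * (al == be)%:R)); last first.
  by move=> al _; rewrite formZl Hdual.
rewrite (eq_bigr (fun al => form (u al) v * (be == al)%:R)); last first.
  by move=> al _; rewrite eq_sym.
rewrite delta_sum -scaleN1r formZl mulN1r (form_sym Hform v).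
by rewrite subrr.
Qed.


Lemma casimir : \sum_(al < d) mode (u' al) 0 (u al) = 0.
Proof.
set S := \sum_(al < d) _.
pose M (al be : 'I_d) := form (u' al) (u' be).
have E1 : S = \sum_(al < d) \sum_(be < d) M be al *: mode (u be) 0 (u al).
  apply: eq_bigr => al _; rewrite {1}(expand_u _ (Hu'1 al)) mode_suml.
  by apply: eq_bigr => be _; rewrite modeZl.
have E2 : S = - \sum_(al < d) \sum_(be < d) M be al *: mode (u be) 0 (u al).
  rewrite /S (eq_bigr (fun al => - mode (u al) 0 (u' al))); last first.
    by move=> al _; apply: skew.
  rewrite sumrN exchange_big /=; congr (- _).
  apply: eq_bigr => al _; rewrite {1}(expand_u _ (Hu'1 al)) mode_sumr.
  apply: eq_bigr => be _; rewrite modeZr /M (form_sym Hform).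
  done.
have : (2%:R : CC) *: S = 0.
  by rewrite scaler_nat mulr2n {1}E1 E2 subrr.
move/eqP; rewrite scaler_eq0 pnatr_eq0 /= => /eqP.
done.
Qed.


Local Notation Fc := (Fcoef mode form u u').

Lemma F_off a b p q : Vdeg mode omega 1 a -> Vdeg mode omega 1 b ->
  p + q != -2 -> Fc a b p q = 0.
Proof.
move=> Ha Hb Hpq; rewrite /Fcoef big1 // => al _.
have Hin := wt_int _ _ _ _ (- q - 1) (deg1_int _ (Hu1 al)) (deg1_int _ Hb).
have Hout := wt_int _ _ _ _ (- p - 1) (deg1_int _ (Hu'1 al)) Hin.
apply: (orth _ _ _ _ (deg1_int _ Ha) Hout).
apply/eqP => /(intr_inj (R:=CC)) E.
move: Hpq; lia.
Qed.

Lemma F_low a b q : Vdeg mode omega 1 b -> q <= -3 -> Fc a b (- q - 2) q = 0.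
Proof.
move=> Hb Hq; rewrite /Fcoef big1 // => al _.
by rewrite (V2 (u al) b) ?mode0r ?form0r //; lia.
Qed.

Lemma F_m2 a b : Vdeg mode omega 1 a -> Vdeg mode omega 1 b ->
  Fc a b 0 (-2) = - form a b.
Proof.
move=> Ha Hb; rewrite /Fcoef.
have -> : (- 0 - 1 : int) = -1 by [].
have -> : (- -2 - 1 : int) = 1 by [].
rewrite [in RHS](expand_u' _ Hb) form_sumr -sumrN; apply: eq_bigr => al _.
rewrite (V0 _ _ (Hu1 al) Hb) modeZr (creation HV _).1 !formZr.
exact: mulNr.
Qed.

Lemma F_pos a b (n : int) : Vdeg mode omega 1 a -> Vdeg mode omega 1 b -> 1 <= n ->
  \sum_(al < d) form a (mode (u' al) n (mode (u al) (-n) b)) =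
  (if n == 1 then - form a b else 0) - n%:~R * d%:R * form a b.
Proof.
move=> Ha Hb Hn.
rewrite (eq_bigr (fun al => form a (mode (u al) (-n) (mode (u' al) n b))
   + form a (mode (mode (u' al) 0 (u al)) 0 b) - n%:~R * form a b)); last first.
  move=> al _; rewrite comm1 // !formDr; congr (_ + _).
  rewrite (V0 _ _ (Hu'1 al) (Hu1 al)) Hdual eqxx modeZl (vacuum_id HV) /=.
  by rewrite !formZr mulN1r mulrN.
rewrite sumrB big_split /=.
rewrite [X in _ + X - _](_ : _ = 0) ?addr0; last first.
  by rewrite -form_sumr -mode_suml casimir mode0l form0r.
rewrite sumr_const card_ord; congr (_ - _); last by rewrite mulrAC mulr_natr.
have [->|n1] := eqVneq n 1.
  rewrite [in RHS](expand_u _ Hb) form_sumr -sumrN; apply: eq_bigr => al _.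
  rewrite (V0 _ _ (Hu'1 al) Hb) modeZr (creation HV _).1 !formZr.
  by rewrite mulNr.
rewrite big1 // => al _.
by rewrite (V2 (u' al) b) ?mode0r ?form0r //; lia.
Qed.


Lemma F_linl c a a' b p q : Fc (c *: a + a') b p q = c * Fc a b p q + Fc a' b p q.
Proof.
rewrite /Fcoef mulr_sumr -big_split; apply: eq_bigr => al _.
by rewrite (form_linl Hform).
Qed.

Lemma F_linr c a b b' p q : Fc a (c *: b + b') p q = c * Fc a b p q + Fc a b' p q.
Proof.
rewrite /Fcoef mulr_sumr -big_split; apply: eq_bigr => al _.
by rewrite (mode_linr HV) (mode_linr HV) formDr formZr.
Qed.

Lemma F_0 a b : Vdeg mode omega 1 a -> Vdeg mode omega 1 b ->
  Fc a b (-2) 0 = - form a b - d%:R * form a b.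
Proof.
move=> Ha Hb; rewrite /Fcoef.
have -> : (- -2 - 1 : int) = 1 by [].
have -> : (- 0 - 1 : int) = - 1 by [].
by rewrite F_pos // eqxx mul1r.
Qed.

Lemma F_hi a b q : Vdeg mode omega 1 a -> Vdeg mode omega 1 b -> 1 <= q ->
  Fc a b (- q - 2) q = - (q + 1)%:~R * d%:R * form a b.
Proof.
move=> Ha Hb Hq; rewrite /Fcoef.
have -> : (- (- q - 2) - 1 : int) = q + 1 by lia.
have -> : (- q - 1 : int) = - (q + 1) by lia.
rewrite F_pos //; last by lia.
have -> : (q + 1 == 1) = false by apply/negbTE; lia.
by rewrite sub0r !mulNr.
Qed.

Definition Gf a b :=
  Gpoly (Fc a b 0 (-2)) (Fc a b (-1) (-1) - 2 * Fc a b 0 (-2))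
    (Fc a b (-2) 0 - 2 * (Fc a b (-1) (-1) - 2 * Fc a b 0 (-2)) - 3 * Fc a b 0 (-2)).

Lemma main_lemma : exists G : V -> V -> {mpoly CC[2]},
    (forall (c : CC) a a' b,
       Vdeg mode omega 1 a -> Vdeg mode omega 1 a' -> Vdeg mode omega 1 b ->
       G (c *: a + a') b = c *: G a b + G a' b /\
       G b (c *: a + a') = c *: G b a + G b a') /\
    forall a b, Vdeg mode omega 1 a -> Vdeg mode omega 1 b ->
      [/\ G a b \is 4.-homog, G a b \is symmetric
        & forall p q : int, Fcoef mode form u u' a b p q = expand_xy (G a b) p q].
Proof.
exists Gf; split.
  move=> c a a' b _ _ _; split.
    by rewrite /Gf !F_linl -Gpoly_lin; congr Gpoly; ring.
  by rewrite /Gf !F_linr -Gpoly_lin; congr Gpoly; ring.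
move=> a b Ha Hb; split; [exact: Gpoly_homog | exact: Gpoly_sym |].
move=> p q; rewrite /Gf expand_G.
have [/eqP Hpq|Hpq] := boolP (p + q == -2); last first.
  by rewrite F_off // !Iq_off // !addr0 !mulr0 !addr0.
have -> : p = - q - 2 by lia.
rewrite !Iq_on //.
have [Hq|Hq] := boolP (q <= -3).
  rewrite F_low // !ifF; try lia.
  by rewrite !addr0 !mulr0 !addr0.
have [->|q2] := eqVneq q (-2).
  rewrite /=.
  have -> : (- (-2) - 2 : int) = 0 by [].
  ring.
have [->|q1] := eqVneq q (-1).
  rewrite /=.
  have -> : (- (-1) - 2 : int) = -1 by [].
  ring.
have [->|q0] := eqVneq q 0.
  rewrite /=.
  have -> : (- 0 - 2 : int) = -2 by [].
  ring.
have Hq1 : 1 <= q by lia.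
rewrite F_hi // F_m2 // F_0 //.
have E4 : (if 4%:Z <= q + 2 then (q - 4%:Z + 3)%:~R else 0) = (q - 1)%:~R :> CC.
  case: ifP => H; first by congr (_%:~R); lia.
  by have -> : q = 1 by lia.
rewrite E4 !ifT; try lia.
ring.
Qed.

End Work.

Theorem proposition1
  (V : lmodType CC) (mode : V -> int -> V -> V) (vac omega : V) (C : CC)
  (HV : is_VOA mode vac omega C)
  (HL1 : forall v, Vdeg mode omega 1 v -> Lvir mode omega 1 v = 0)
  (form : V -> V -> CC) (Hform : is_LZ_metric mode vac omega form)
  (d : nat) (hd : (0 < d)%N) (u u' : 'I_d -> V)
  (Hu1 : forall al, Vdeg mode omega 1 (u al))
  (Hu_free : forall c : 'I_d -> CC, \sum_(al < d) c al *: u al = 0 ->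
               forall al, c al = 0)
  (Hu_span : forall v, Vdeg mode omega 1 v ->
               exists c : 'I_d -> CC, v = \sum_(al < d) c al *: u al)
  (Hu'1 : forall al, Vdeg mode omega 1 (u' al))
  (Hdual : forall al be, form (u' al) (u be) = (al == be)%:R) :
  exists G : V -> V -> {mpoly CC[2]},
    (forall (c : CC) a a' b,
       Vdeg mode omega 1 a -> Vdeg mode omega 1 a' -> Vdeg mode omega 1 b ->
       G (c *: a + a') b = c *: G a b + G a' b /\
       G b (c *: a + a') = c *: G b a + G b a') /\
    forall a b, Vdeg mode omega 1 a -> Vdeg mode omega 1 b ->
      [/\ G a b \is 4.-homog, G a b \is symmetric
        & forall p q : int, Fcoef mode form u u' a b p q = expand_xy (G a b) p q].
Proof.
by eapply main_lemma; eassumption.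
Qed.
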